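(* Every easy pair of words $(x,y)$ over a finite alphabet $\Sigma$ can be separated exactly by a 2-state MCQFA with real amplitudes.
   Context: A pair of words $(x,y)$ means two different words over the same finite alphabet $\Sigma$. It is easy if there is $\sigma\in\Sigma$ with $|x|_\sigma\neq|y|_\sigma$, where $|w|_\sigma$ is the number of occurrences of $\sigma$ in $w$; otherwise it is hard. An $n$-state Moore–Crutchfield quantum finite automaton (MCQFA) over $\Sigma$ consists of states $q_1,\dots,q_n$ (identified with the standard basis vectors of $\mathbb{C}^n$), a unitary matrix $U_\sigma\in\mathbb{C}^{n\times n}$ for each $\sigma\in\Sigma$, an initial unit vector $|u_0\rangle\in\mathbb{C}^n$, and a set $Q_a$ of accepting states. On input $w=w_1\cdots w_k$ the final state is $|u_f^w\rangle=U_{w_k}\cdots U_{w_1}|u_0\rangle$ and $w$ is accepted with probability $\sum_{q_j\in Q_a}|\langle q_j|u_f^w\rangle|^2$. It has real amplitudes if all $U_\sigma$ and $|u_0\rangle$ are real. A pair $(x,y)$ is separated exactly if one word is accepted with probability $1$ and the other with probability $0$. *)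

(* Defs.v *)
From mathcomp Require Import all_boot.
From Stdlib Require Import Reals.

Set Implicit Arguments.
Unset Strict Implicit.
Unset Printing Implicit Defensive.

Local Open Scope R_scope.

Record mat2 := Mat2 { m11 : R; m12 : R; m21 : R; m22 : R }.
Definition vec2 := (R * R)%type.

(* M^T M = I : a real matrix is unitary iff it is orthogonal. *)
Definition unitary2 (M : mat2) : Prop :=
  m11 M * m11 M + m21 M * m21 M = 1 /\
  m12 M * m12 M + m22 M * m22 M = 1 /\
  m11 M * m12 M + m21 M * m22 M = 0.

Definition mv2 (M : mat2) (v : vec2) : vec2 :=
  (m11 M * fst v + m12 M * snd v, m21 M * fst v + m22 M * snd v).

Definition unit_vec2 (v : vec2) : Prop := fst v * fst v + snd v * snd v = 1.

(* A 2-state MCQFA with real amplitudes over alphabet Sigma: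
   states q1, q2 (indexed by 'I_2), unitary (here: real orthogonal) matrices U s,
   initial unit vector u0, accepting set Qa. *)
Record MCQFA2 (Sigma : finType) := {
  U : Sigma -> mat2;
  u0 : vec2;
  Qa : {set 'I_2}
}.

Definition wf_MCQFA2 (Sigma : finType) (A : MCQFA2 Sigma) : Prop :=
  (forall s, unitary2 (U A s)) /\ unit_vec2 (u0 A).

(* final state U_{w_k} ... U_{w_1} u0 : the first letter acts first *)
Definition final_state (Sigma : finType) (A : MCQFA2 Sigma) (w : seq Sigma) : vec2 :=
  foldl (fun v s => mv2 (U A s) v) (u0 A) w.

Definition coord2 (v : vec2) (j : 'I_2) : R :=
  if (nat_of_ord j == 0%nat) then fst v else snd v.

Definition acc_prob (Sigma : finType) (A : MCQFA2 Sigma) (w : seq Sigma) : R :=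
  \big[Rplus/0]_(j < 2 | j \in Qa A) (coord2 (final_state A w) j * coord2 (final_state A w) j).

Definition easy_pair (Sigma : finType) (x y : seq Sigma) : Prop :=
  x <> y /\ exists s : Sigma, count_mem s x <> count_mem s y.

Definition separates_exactly (Sigma : finType) (A : MCQFA2 Sigma) (x y : seq Sigma) : Prop :=
  (acc_prob A x = 1 /\ acc_prob A y = 0) \/ (acc_prob A x = 0 /\ acc_prob A y = 1).

(* Main.v *)
Require Import Defs.
From mathcomp Require Import all_boot.
From Stdlib Require Import Reals Lra.
From HB Require Import structures.

Lemma Rplus_assoc' : associative Rplus.
Proof. move=> a b c; by rewrite Rplus_assoc. Qed.
HB.instance Definition _ := Monoid.isComLaw.Build R 0%R Rplus Rplus_assoc' Rplus_comm Rplus_0_l.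

Local Open Scope R_scope.

Definition rotm (t : R) : mat2 := Mat2 (cos t) (- sin t) (sin t) (cos t).
Definition idm : mat2 := Mat2 1 0 0 1.

Lemma rot_comp (p q : R) (v : vec2) :
  mv2 (rotm p) (mv2 (rotm q) v) = mv2 (rotm (p + q)) v.
Proof.
  destruct v as [v1 v2]; unfold mv2, rotm; simpl.
  rewrite cos_plus sin_plus; f_equal; ring.
Qed.

Lemma rot0 (v : vec2) : mv2 (rotm 0) v = v.
Proof. destruct v as [v1 v2]; unfold mv2, rotm; simpl; rewrite cos_0 sin_0; f_equal; ring. Qed.

Lemma idm_v (v : vec2) : mv2 idm v = v.
Proof. destruct v as [v1 v2]; unfold mv2, idm; simpl; f_equal; ring. Qed.

Lemma fold_rot (Sigma : finType) (s : Sigma) (t : R) (w : seq Sigma) (v : vec2) :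
  foldl (fun v c => mv2 (if c == s then rotm t else idm) v) v w
  = mv2 (rotm (INR (count_mem s w) * t)) v.
Proof.
  elim: w v => [|c w IH] v /=.
  - by rewrite Rmult_0_l rot0.
  - rewrite IH. case E: (c == s).
    + rewrite rot_comp. f_equal. f_equal. have -> : (true + count_mem s w)%nat = S (count_mem s w) by []. rewrite S_INR. ring.
    + by rewrite /= add0n idm_v.
Qed.

Theorem mainTheorem2 (Sigma : finType) (x y : seq Sigma) :
  easy_pair x y ->
  exists A : MCQFA2 Sigma, wf_MCQFA2 A /\ separates_exactly A x y.
Proof.
  move=> [_ [s Hs]].
  set a := INR (count_mem s x). set b := INR (count_mem s y).
  have Hd : b - a <> 0.
  { move=> E. apply: Hs. apply: INR_eq. rewrite /a /b in E. lra. }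
  set t := PI / (2 * (b - a)).
  exists (Build_MCQFA2 (fun c => if c == s then rotm t else idm)
            (mv2 (rotm (- (a * t))) (1, 0)) [set ord0]).
  split.
  - split.
    + move=> c /=. case: (c == s); rewrite /unitary2 /=.
      * have := sin2_cos2 t. rewrite /Rsqr. move=> H. split; [lra|split; lra].
      * split; [lra|split; lra].
    + rewrite /unit_vec2 /mv2 /=. have := sin2_cos2 (- (a * t)). rewrite /Rsqr. lra.
  - left.
    have Hfx : final_state (Build_MCQFA2 (fun c => if c == s then rotm t else idm)
            (mv2 (rotm (- (a * t))) (1, 0)) [set ord0]) x = (1, 0).
    { rewrite /final_state /= fold_rot rot_comp -/a.
      replace (a * t + - (a * t)) with 0 by ring. by rewrite rot0. }
    have Hfy : final_state (Build_MCQFA2 (fun c => if c == s then rotm t else idm)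
            (mv2 (rotm (- (a * t))) (1, 0)) [set ord0]) y = (0, 1).
    { rewrite /final_state /= fold_rot rot_comp -/b.
      replace (b * t + - (a * t)) with (PI / 2).
      - rewrite /mv2 /= cos_PI2 sin_PI2. f_equal; ring.
      - rewrite /t. field; repeat split; try exact Hd; lra. }
    rewrite /acc_prob Hfx Hfy.
    split; rewrite /= big_mkcond !big_ord_recl !big_ord0 /= !inE /=;
      rewrite /coord2 /=; ring.
Qed.
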